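(* Let $K_1,K_2$ be non-empty disjoint compact subsets of $\mathbf S^3$. There is $C\ge1$ such that for any $x\in K_1$, $y\in K_2$ and any $w\in\mathcal L_{\mathbb C}$ whose chain $L_w$ passes through $x$ and meets $K_2$, \[C^{-1}d(y,L_w)\le d_E(\pi_x(y),w)\le C\,d(y,L_w).\]
   Context: On $\mathbb{C}^3$: $u\cdot v=\sum u_i\bar v_i$, $\|u\|=\sqrt{u\cdot u}$, $\langle u,v\rangle=u_0\bar v_0-u_1\bar v_1-u_2\bar v_2$, $q(u)=\langle u,u\rangle$, $\|u\wedge v\|^2=\|u\|^2\|v\|^2-|u\cdot v|^2$. On $\mathbb P^2_{\mathbb C}$, $d_E(u,v)=\|u\wedge v\|/(\|u\|\|v\|)$. $\mathbf S^3=\{u:q(u)=0\}$ with visual metric $d(u,v)=\sqrt{|\langle u,v\rangle|/(\|u\|\|v\|)}$. $\mathcal L_{\mathbb C}=\{w:q(w)<0\}$; $w^\perp=\{u:\langle u,w\rangle=0\}$ and $L_w=w^\perp\cap\mathbf S^3$ (a chain). For $x\in\mathbf S^3$ and $y\in\mathbf S^3\setminus\{x\}$, $\pi_x(y)$ is the unique intersection point of the projective lines $x^\perp$ and $y^\perp$. $d(y,L_w)=\inf_{z\in L_w}d(y,z)$. *)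

(* Defs.v *)
From HB Require Import structures.
From mathcomp Require Import all_boot all_order all_algebra.
From mathcomp Require Import all_classical all_reals all_analysis.
From mathcomp Require Import complex.
Set Implicit Arguments. Unset Strict Implicit. Unset Printing Implicit Defensive.
Import Order.TTheory GRing.Theory Num.Theory.
Import ComplexField.
Import numFieldNormedType.Exports.
Local Open Scope classical_set_scope.
Local Open Scope ring_scope.

Section Defs.
Variable R : realType.
Local Notation C := R[i].

Definition vec := 'rV[C]_3.

Definition hdot (u v : vec) : C := \sum_(i < 3) u 0 i * conjc (v 0 i).

Definition enorm (u : vec) : R := Num.sqrt (complex.Re (hdot u u)).

Definition wedge_norm (u v : vec) : R :=
  Num.sqrt (enorm u ^+ 2 * enorm v ^+ 2 - Normc.normc (hdot u v) ^+ 2).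

(* chordal distance d_E on P^2_C, computed on representatives *)
Definition dE (u v : vec) : R := wedge_norm u v / (enorm u * enorm v).

Definition herm (u v : vec) : C :=
  u 0 0 * conjc (v 0 0) - u 0 1 * conjc (v 0 1) - u 0 2%:R * conjc (v 0 2%:R).

(* q(u) = <u,u> (a real number; we take its real part) *)
Definition q (u : vec) : R := complex.Re (herm u u).

(* representatives of points of S^3 = {q = 0} in P^2_C *)
Definition S3 (u : vec) : Prop := u != 0 /\ herm u u = 0.

(* representatives of points of L_C = {q < 0} *)
Definition LC (w : vec) : Prop := q w < 0.

Definition chain (w : vec) : set vec := [set z | S3 z /\ herm z w = 0].

(* visual metric on S^3 *)
Definition dvis (u v : vec) : R :=
  Num.sqrt (Normc.normc (herm u v) / (enorm u * enorm v)).

Definition dist_chain (y w : vec) : R := inf [set dvis y z | z in chain w].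

(* p represents the point pi_x(y) = x^perp cap y^perp  (for y <> x in P^2) *)
Definition is_pi (x y p : vec) : Prop := p != 0 /\ herm p x = 0 /\ herm p y = 0.

Definition proj_eq (u v : vec) : Prop := exists c : C, c != 0 /\ v = c *: u.

(* compactness in P^2_C (metrized by d_E), stated sequentially:
   every sequence in K has a subsequence converging in P^2 to a point of K *)
Definition pcompact (K : set vec) : Prop :=
  forall u : nat -> vec, (forall n, K (u n)) ->
  exists (phi : nat -> nat) (z : vec),
    (forall n, (phi n < phi n.+1)%N) /\ K z /\
    dE (u (phi n)) z @[n --> \oo] --> (0 : R).

End Defs.

(* Main.v *)
Require Import Defs.
From HB Require Import structures.
From mathcomp Require Import all_boot all_order all_algebra.
From mathcomp Require Import all_classical all_reals all_analysis.
From mathcomp Require Import complex.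
From mathcomp Require Import ring lra.
Import Order.TTheory GRing.Theory Num.Theory.
Local Open Scope classical_set_scope.
Local Open Scope ring_scope.

Module Aux.
Import ComplexField.
Import numFieldNormedType.Exports.
Set Implicit Arguments. Unset Strict Implicit. Unset Printing Implicit Defensive.

Section SA.
Variable R : realType.
Local Notation C := R[i].
Local Notation V := (vec R).
Local Notation nc := (@Normc.normc R).
Local Notation cj := (@conjc R).

Definition i0 : 'I_3 := 0.
Definition i1 : 'I_3 := 1.
Definition i2 : 'I_3 := 2%:R.

Lemma hdotE (u v : V) : hdot u v = u 0 i0 * cj (v 0 i0) + u 0 i1 * cj (v 0 i1) + u 0 i2 * cj (v 0 i2).
Proof.
rewrite /hdot !big_ord_recr big_ord0 /= add0r.
by do 3 f_equal; (try f_equal); f_equal; apply: val_inj.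
Qed.

Lemma hermE (u v : V) : herm u v = u 0 i0 * cj (v 0 i0) - u 0 i1 * cj (v 0 i1) - u 0 i2 * cj (v 0 i2).
Proof. by []. Qed.

Lemma cjD (a b : C) : cj (a + b) = cj a + cj b.
Proof. by case: a => ? ?; case: b => ? ?; apply/eqP; rewrite eq_complex /= opprD !eqxx. Qed.
Lemma cjM (a b : C) : cj (a * b) = cj a * cj b.
Proof. by case: a => ? ?; case: b => ? ?; apply/eqP; rewrite eq_complex /=; apply/andP; split; apply/eqP; ring. Qed.
Lemma cjN (a : C) : cj (- a) = - cj a.
Proof. by case: a => ? ?. Qed.
Lemma cjB (a b : C) : cj (a - b) = cj a - cj b.
Proof. by rewrite cjD cjN. Qed.
Lemma cjK (a : C) : cj (cj a) = a.
Proof. by case: a => ? ? /=; rewrite opprK. Qed.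
Lemma cj1 : cj 1 = 1.
Proof. by apply/eqP; rewrite eq_complex /= oppr0 !eqxx. Qed.
Lemma cj0 : cj 0 = 0.
Proof. by apply/eqP; rewrite eq_complex /= oppr0 !eqxx. Qed.
Lemma cjR (r : R) : cj (r%:C)%C = (r%:C)%C.
Proof. by apply/eqP; rewrite eq_complex /= oppr0 !eqxx. Qed.
Lemma cjV (a : C) : cj (a^-1) = (cj a)^-1.
Proof. exact: conjc_inv. Qed.
Lemma test (a b : C) : cj (a * cj b + 1) = cj a * b + 1.
Proof. by rewrite cjD cjM cjK cj1. Qed.


Lemma mulcJ (c : C) : c * cj c = ((nc c ^+ 2)%:C)%C.
Proof.
case: c => a b; rewrite /= sqr_sqrtr ?addr_ge0 ?sqr_ge0 //.
apply/eqP; rewrite eq_complex /=; apply/andP; split; apply/eqP; ring.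
Qed.

Lemma RcD (a b : R) : ((a + b)%:C)%C = (a%:C + b%:C)%C :> C.
Proof. by apply/eqP; rewrite eq_complex /= addr0 !eqxx. Qed.
Lemma RcM (a b : R) : ((a * b)%:C)%C = (a%:C * b%:C)%C :> C.
Proof. by apply/eqP; rewrite eq_complex /= !mulr0 mul0r subr0 addr0 !eqxx. Qed.
Lemma RcN (a : R) : ((- a)%:C)%C = - (a%:C)%C :> C.
Proof. by apply/eqP; rewrite eq_complex /= oppr0 !eqxx. Qed.
Lemma RcB (a b : R) : ((a - b)%:C)%C = (a%:C - b%:C)%C :> C.
Proof. by rewrite RcD RcN. Qed.
Lemma Rc1 : ((1 : R)%:C)%C = 1 :> C. Proof. by []. Qed.
Lemma Rc0 : ((0 : R)%:C)%C = 0 :> C. Proof. by []. Qed.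
Lemma RcI (a b : R) : (a%:C)%C = (b%:C)%C :> C -> a = b.
Proof. by case. Qed.
Lemma ReR (a : R) : complex.Re ((a%:C)%C : C) = a. Proof. by []. Qed.

Lemma nc_ge0 (c : C) : 0 <= nc c.
Proof. by case: c => ? ?; rewrite /= sqrtr_ge0. Qed.
Lemma nc_eq0 (c : C) : nc c = 0 -> c = 0.
Proof. exact: Normc.eq0_normc. Qed.
Lemma ncM (a b : C) : nc (a * b) = nc a * nc b.
Proof. exact: Normc.normcM. Qed.
Lemma ncJ (a : C) : nc (cj a) = nc a.
Proof. by case: a => ? ? /=; rewrite sqrrN. Qed.
Lemma ncR (a : R) : nc ((a%:C)%C : C) = `|a|.
Proof. by rewrite /= expr0n /= addr0 sqrtr_sqr. Qed.
Lemma ncN (a : C) : nc (- a) = nc a.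
Proof. by case: a => ? ? /=; rewrite !sqrrN. Qed.
Lemma ncV (a : C) : nc (a^-1) = (nc a)^-1.
Proof. exact: Normc.normcV. Qed.
Lemma Re_le_nc (c : C) : complex.Re c <= nc c.
Proof.
case: c => a b /=.
have h : `|a| <= Num.sqrt (a ^+ 2 + b ^+ 2).
  by rewrite -sqrtr_sqr ler_sqrt ?addr_ge0 ?sqr_ge0 // lerDl sqr_ge0.
exact: le_trans (ler_norm a) h.
Qed.
Lemma nc_gt0 (c : C) : c != 0 -> 0 < nc c.
Proof. by move=> h; rewrite lt_def nc_ge0 andbT; apply/eqP => /nc_eq0 /eqP; rewrite (negbTE h). Qed.
Lemma ncD (a b : C) : nc (a + b) <= nc a + nc b.
Proof. exact: le_normcD. Qed.

Lemma eD (u v : V) i : (u + v) 0 i = u 0 i + v 0 i. Proof. by rewrite mxE. Qed.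
Lemma eB (u v : V) i : (u - v) 0 i = u 0 i - v 0 i. Proof. by rewrite !mxE. Qed.
Lemma eZ (c : C) (u : V) i : (c *: u) 0 i = c * u 0 i. Proof. by rewrite mxE. Qed.

Definition sq3 (u : V) : R := nc (u 0 i0) ^+ 2 + nc (u 0 i1) ^+ 2 + nc (u 0 i2) ^+ 2.

Lemma hdot_self (u : V) : hdot u u = ((sq3 u)%:C)%C.
Proof. by rewrite hdotE !mulcJ /sq3 !RcD. Qed.

Lemma herm_self (u : V) : herm u u = ((nc (u 0 i0) ^+ 2 - nc (u 0 i1) ^+ 2 - nc (u 0 i2) ^+ 2)%:C)%C.
Proof. by rewrite hermE !mulcJ !RcB. Qed.

Lemma sq3_ge0 u : 0 <= sq3 u.
Proof. by rewrite /sq3 !addr_ge0 ?sqr_ge0. Qed.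

Lemma enorm2 (u : V) : enorm u ^+ 2 = sq3 u.
Proof. by rewrite /enorm hdot_self ReR sqr_sqrtr // sq3_ge0. Qed.

Lemma enorm_ge0 (u : V) : 0 <= enorm u.
Proof. exact: sqrtr_ge0. Qed.

Lemma hdot_selfE (u : V) : hdot u u = ((enorm u ^+ 2)%:C)%C.
Proof. by rewrite enorm2 hdot_self. Qed.

Lemma vec_eq (u v : V) : u 0 i0 = v 0 i0 -> u 0 i1 = v 0 i1 -> u 0 i2 = v 0 i2 -> u = v.
Proof.
move=> h0 h1 h2; apply/matrixP => i j; rewrite !ord1.
case: j => [[|[|[|j]]] hj] //.
- by rewrite (_ : Ordinal hj = i0) //; apply: val_inj.
- by rewrite (_ : Ordinal hj = i1) //; apply: val_inj.
- by rewrite (_ : Ordinal hj = i2) //; apply: val_inj.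
Qed.

Lemma enorm_gt0 (u : V) : u != 0 -> 0 < enorm u.
Proof.
move=> hu; rewrite lt_def enorm_ge0 andbT; apply/eqP => h.
have : sq3 u = 0 by rewrite -enorm2 h expr0n.
rewrite /sq3 => h3.
have a0 : 0 <= nc (u 0 i0) ^+ 2 by apply: sqr_ge0.
have a1 : 0 <= nc (u 0 i1) ^+ 2 by apply: sqr_ge0.
have a2 : 0 <= nc (u 0 i2) ^+ 2 by apply: sqr_ge0.
have z : forall c : C, nc c ^+ 2 = 0 -> c = 0.
  by move=> c /eqP; rewrite sqrf_eq0 => /eqP /nc_eq0.
move/eqP: hu; apply; apply: vec_eq; rewrite mxE; apply: z; lra.
Qed.


Lemma hdot_sym (u v : V) : hdot v u = cj (hdot u v).
Proof. rewrite !hdotE !cjD !cjM !cjK; ring. Qed.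
Lemma herm_sym (u v : V) : herm v u = cj (herm u v).
Proof. rewrite !hermE !cjB !cjM !cjK; ring. Qed.
Lemma herm_addl (u v w : V) : herm (u + v) w = herm u w + herm v w.
Proof. rewrite !hermE !eD; ring. Qed.
Lemma herm_subl (u v w : V) : herm (u - v) w = herm u w - herm v w.
Proof. rewrite !hermE !eB; ring. Qed.
Lemma herm_scalel (c : C) (u w : V) : herm (c *: u) w = c * herm u w.
Proof. rewrite !hermE !eZ; ring. Qed.
Lemma herm_addr (u v w : V) : herm w (u + v) = herm w u + herm w v.
Proof. rewrite !hermE !eD !cjD; ring. Qed.
Lemma herm_scaler (c : C) (u w : V) : herm w (c *: u) = cj c * herm w u.
Proof. rewrite !hermE !eZ !cjM; ring. Qed.
Lemma hdot_addl (u v w : V) : hdot (u + v) w = hdot u w + hdot v w.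
Proof. rewrite !hdotE !eD; ring. Qed.
Lemma hdot_subl (u v w : V) : hdot (u - v) w = hdot u w - hdot v w.
Proof. rewrite !hdotE !eB; ring. Qed.
Lemma hdot_scalel (c : C) (u w : V) : hdot (c *: u) w = c * hdot u w.
Proof. rewrite !hdotE !eZ; ring. Qed.
Lemma hdot_addr (u v w : V) : hdot w (u + v) = hdot w u + hdot w v.
Proof. rewrite !hdotE !eD !cjD; ring. Qed.
Lemma hdot_subr (u v w : V) : hdot w (u - v) = hdot w u - hdot w v.
Proof. rewrite !hdotE !eB !cjB; ring. Qed.
Lemma hdot_scaler (c : C) (u w : V) : hdot w (c *: u) = cj c * hdot w u.
Proof. rewrite !hdotE !eZ !cjM; ring. Qed.

Lemma sqr_le_sqrt (a b : R) : 0 <= b -> a ^+ 2 <= b ^+ 2 -> a <= b.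
Proof. move=> hb h; nra. Qed.

Lemma cs_hdot (u v : V) : nc (hdot u v) <= enorm u * enorm v.
Proof.
apply: sqr_le_sqrt; first by rewrite mulr_ge0 ?enorm_ge0.
set t1 := u 0 i0 * v 0 i1 - u 0 i1 * v 0 i0.
set t2 := u 0 i0 * v 0 i2 - u 0 i2 * v 0 i0.
set t3 := u 0 i1 * v 0 i2 - u 0 i2 * v 0 i1.
have E : hdot u u * hdot v v - hdot u v * cj (hdot u v) = t1 * cj t1 + t2 * cj t2 + t3 * cj t3.
  rewrite /t1 /t2 /t3 !hdotE ?(cjB, cjD, cjN, cjM, cjK); ring.
rewrite !hdot_selfE !mulcJ -!RcM -!RcB -!RcD in E; move/RcI: E => E.
have : 0 <= nc t1 ^+ 2 + nc t2 ^+ 2 + nc t3 ^+ 2 by rewrite !addr_ge0 ?sqr_ge0.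
rewrite -E exprMn; lra.
Qed.

Lemma cs_herm (u v : V) : nc (herm u v) <= enorm u * enorm v.
Proof.
apply: sqr_le_sqrt; first by rewrite mulr_ge0 ?enorm_ge0.
set t1 := u 0 i0 * v 0 i1 + u 0 i1 * v 0 i0.
set t2 := u 0 i0 * v 0 i2 + u 0 i2 * v 0 i0.
set t3 := u 0 i1 * v 0 i2 - u 0 i2 * v 0 i1.
have E : hdot u u * hdot v v - herm u v * cj (herm u v) = t1 * cj t1 + t2 * cj t2 + t3 * cj t3.
  rewrite /t1 /t2 /t3 !hdotE !hermE ?(cjB, cjD, cjN, cjM, cjK); ring.
rewrite !hdot_selfE !mulcJ -!RcM -!RcB -!RcD in E; move/RcI: E => E.
have : 0 <= nc t1 ^+ 2 + nc t2 ^+ 2 + nc t3 ^+ 2 by rewrite !addr_ge0 ?sqr_ge0.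
rewrite -E exprMn; lra.
Qed.

Lemma enorm_scale (c : C) (u : V) : enorm (c *: u) = nc c * enorm u.
Proof.
apply/eqP; rewrite -(@eqrXn2 _ 2) ?mulr_ge0 ?enorm_ge0 ?nc_ge0 //.
rewrite exprMn; apply/eqP; apply: RcI; rewrite (RcM (nc c ^+ 2)) -!hdot_selfE hdot_scalel hdot_scaler.
by rewrite mulrA mulcJ.
Qed.

Lemma enorm_add (u v : V) : enorm (u + v) <= enorm u + enorm v.
Proof.
apply: sqr_le_sqrt; first by rewrite addr_ge0 ?enorm_ge0.
have E : hdot (u + v) (u + v) = hdot u u + hdot v v + (hdot u v + cj (hdot u v)).
  rewrite hdot_addl !hdot_addr (hdot_sym u v); ring.
have F : hdot u v + cj (hdot u v) = (2 * complex.Re (hdot u v))%:C%C.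
  by case: (hdot u v) => a b; apply/eqP; rewrite eq_complex /=; apply/andP; split; apply/eqP; ring.
rewrite F !hdot_selfE -!RcD in E; move/RcI: E => ->.
have := Re_le_nc (hdot u v); have := cs_hdot u v.
have := enorm_ge0 u; have := enorm_ge0 v. nra.
Qed.


Ltac cjs := rewrite ?(cjB, cjD, cjN, cjM, cjK, cj1, cj0).

Definition crossv (x y : V) : V := \row_(j < 3)
  (if j == i0 then cj (x 0 i1) * cj (y 0 i2) - cj (x 0 i2) * cj (y 0 i1)
   else if j == i1 then cj (x 0 i0) * cj (y 0 i2) - cj (x 0 i2) * cj (y 0 i0)
   else cj (x 0 i1) * cj (y 0 i0) - cj (x 0 i0) * cj (y 0 i1)).

Lemma crossE0 x y : crossv x y 0 i0 = cj (x 0 i1) * cj (y 0 i2) - cj (x 0 i2) * cj (y 0 i1).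
Proof. by rewrite mxE. Qed.
Lemma crossE1 x y : crossv x y 0 i1 = cj (x 0 i0) * cj (y 0 i2) - cj (x 0 i2) * cj (y 0 i0).
Proof. by rewrite mxE. Qed.
Lemma crossE2 x y : crossv x y 0 i2 = cj (x 0 i1) * cj (y 0 i0) - cj (x 0 i0) * cj (y 0 i1).
Proof. by rewrite mxE. Qed.

Ltac crs := rewrite ?(crossE0, crossE1, crossE2).

Lemma herm_cross_x x y : herm (crossv x y) x = 0.
Proof. rewrite hermE; crs; ring. Qed.
Lemma herm_cross_y x y : herm (crossv x y) y = 0.
Proof. rewrite hermE; crs; ring. Qed.
Lemma herm_cross_self x y :
  herm (crossv x y) (crossv x y) = - (herm x y * herm y x - herm x x * herm y y).
Proof. rewrite !hermE; crs; cjs; ring. Qed.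
Lemma hdot_cross_self x y :
  hdot (crossv x y) (crossv x y) + hdot y x * cj (hdot y x) = hdot x x * hdot y y.
Proof. rewrite !hdotE; crs; cjs; ring. Qed.

Lemma vec_neq0 (u : V) : u != 0 -> [\/ u 0 i0 != 0, u 0 i1 != 0 | u 0 i2 != 0].
Proof.
move=> hu; case: (eqVneq (u 0 i0) 0) => h0; last by constructor 1.
case: (eqVneq (u 0 i1) 0) => h1; last by constructor 2.
case: (eqVneq (u 0 i2) 0) => h2; last by constructor 3.
by move/eqP: hu; case; apply: vec_eq; rewrite mxE.
Qed.

Lemma cross_span (x y r : V) : herm r x = 0 -> herm r y = 0 -> crossv x y != 0 ->
  exists c : C, r = c *: crossv x y.
Proof.
move=> hx hy hQ.
set Q := crossv x y.
have e0 : r 0 i1 * Q 0 i2 - r 0 i2 * Q 0 i1 = cj (x 0 i0) * herm r y - cj (y 0 i0) * herm r x.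
  by rewrite /Q !hermE; crs; ring.
have e1 : r 0 i2 * Q 0 i0 - r 0 i0 * Q 0 i2 = - cj (x 0 i1) * herm r y + cj (y 0 i1) * herm r x.
  by rewrite /Q !hermE; crs; ring.
have e2 : r 0 i0 * Q 0 i1 - r 0 i1 * Q 0 i0 = - cj (x 0 i2) * herm r y + cj (y 0 i2) * herm r x.
  by rewrite /Q !hermE; crs; ring.
rewrite hx hy !mulr0 subr0 addr0 in e0 e1 e2.
move/eqP: e0; rewrite subr_eq0 => /eqP e0.
move/eqP: e1; rewrite subr_eq0 => /eqP e1.
move/eqP: e2; rewrite subr_eq0 => /eqP e2.
case: (vec_neq0 hQ) => hk.
- exists (r 0 i0 / Q 0 i0); apply: vec_eq; rewrite eZ mulrAC.
  + by rewrite mulfK.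
  + by rewrite e2 mulfK.
  + by rewrite -e1 mulfK.
- exists (r 0 i1 / Q 0 i1); apply: vec_eq; rewrite eZ mulrAC.
  + by rewrite -e2 mulfK.
  + by rewrite mulfK.
  + by rewrite e0 mulfK.
- exists (r 0 i2 / Q 0 i2); apply: vec_eq; rewrite eZ mulrAC.
  + by rewrite e1 mulfK.
  + by rewrite -e0 mulfK.
  + by rewrite mulfK.
Qed.

Lemma sq_eq0 (c : C) : nc c ^+ 2 = 0 -> c = 0.
Proof. by move/eqP; rewrite sqrf_eq0 => /eqP /nc_eq0. Qed.

Lemma S3_coord0 (a : V) : S3 a -> a 0 i0 != 0.
Proof.
case=> ha haa; apply/eqP => h0.
rewrite herm_self h0 Normc.normc0 expr0n /= sub0r -Rc0 in haa.
move/RcI: haa => haa.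
have s1 := sqr_ge0 (nc (a 0 i1)); have s2 := sqr_ge0 (nc (a 0 i2)).
have z1 : nc (a 0 i1) ^+ 2 = 0 by lra.
have z2 : nc (a 0 i2) ^+ 2 = 0 by lra.
move/eqP: ha; apply; apply: vec_eq; rewrite mxE //; exact: sq_eq0.
Qed.

Lemma null_perp (a b : V) : S3 a -> S3 b -> herm a b = 0 -> proj_eq a b.
Proof.
move=> Sa Sb hab.
have a0 := S3_coord0 Sa; have b0 := S3_coord0 Sb.
case: Sa => _ haa; case: Sb => _ hbb.
have Ea : a 0 i0 * cj (a 0 i0) = a 0 i1 * cj (a 0 i1) + a 0 i2 * cj (a 0 i2).
  by apply/eqP; rewrite -subr_eq0 opprD addrA -hermE haa.
have Eb : b 0 i0 * cj (b 0 i0) = b 0 i1 * cj (b 0 i1) + b 0 i2 * cj (b 0 i2).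
  by apply/eqP; rewrite -subr_eq0 opprD addrA -hermE hbb.
have Eab : a 0 i0 * cj (b 0 i0) = a 0 i1 * cj (b 0 i1) + a 0 i2 * cj (b 0 i2).
  by apply/eqP; rewrite -subr_eq0 opprD addrA -hermE hab.
set t := a 0 i1 * b 0 i2 - a 0 i2 * b 0 i1.
have Et : t * cj t = (a 0 i1 * cj (a 0 i1) + a 0 i2 * cj (a 0 i2)) * (b 0 i1 * cj (b 0 i1) + b 0 i2 * cj (b 0 i2))
   - (a 0 i1 * cj (b 0 i1) + a 0 i2 * cj (b 0 i2)) * cj (a 0 i1 * cj (b 0 i1) + a 0 i2 * cj (b 0 i2)).
  by rewrite /t; cjs; ring.
rewrite -Ea -Eb -Eab in Et.
have t0 : t = 0.
  apply: sq_eq0; apply: RcI; rewrite -mulcJ Et; cjs; rewrite Rc0; ring.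
have h1 : cj (b 0 i0) * (a 0 i0 * b 0 i1 - a 0 i1 * b 0 i0) = - cj (b 0 i2) * t.
  have -> : cj (b 0 i0) * (a 0 i0 * b 0 i1 - a 0 i1 * b 0 i0) =
     (a 0 i0 * cj (b 0 i0)) * b 0 i1 - a 0 i1 * (b 0 i0 * cj (b 0 i0)) by ring.
  rewrite Eab Eb /t; ring.
have h2 : cj (b 0 i0) * (a 0 i0 * b 0 i2 - a 0 i2 * b 0 i0) = cj (b 0 i1) * t.
  have -> : cj (b 0 i0) * (a 0 i0 * b 0 i2 - a 0 i2 * b 0 i0) =
     (a 0 i0 * cj (b 0 i0)) * b 0 i2 - a 0 i2 * (b 0 i0 * cj (b 0 i0)) by ring.
  rewrite Eab Eb /t; ring.
rewrite t0 !mulr0 in h1 h2.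
have cb0 : cj (b 0 i0) != 0 by rewrite conjc_eq0.

move/eqP: h1; rewrite mulf_eq0 (negbTE cb0) /= subr_eq0 => /eqP h1.
move/eqP: h2; rewrite mulf_eq0 (negbTE cb0) /= subr_eq0 => /eqP h2.
exists (b 0 i0 / a 0 i0); split; first by rewrite mulf_neq0 ?invr_eq0.
apply: vec_eq; rewrite eZ mulrAC.
- by rewrite mulfK.
- by rewrite (mulrC (b 0 i0)) -h1 (mulrC (a 0 i0)) mulfK.
- by rewrite (mulrC (b 0 i0)) -h2 (mulrC (a 0 i0)) mulfK.
Qed.

Definition kappa (u v : V) : R := nc (herm u v) / (enorm u * enorm v).

Lemma wedge_sym (u v : V) : wedge_norm u v = wedge_norm v u.
Proof. by rewrite /wedge_norm (hdot_sym u v) ncJ mulrC. Qed.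

Lemma dE_sym (u v : V) : dE u v = dE v u.
Proof. by rewrite /dE wedge_sym (mulrC (enorm u)). Qed.

Lemma kappa_sym (u v : V) : kappa u v = kappa v u.
Proof. by rewrite /kappa (herm_sym u v) ncJ (mulrC (enorm u)). Qed.

Lemma wedge_arg_ge0 (u v : V) : 0 <= enorm u ^+ 2 * enorm v ^+ 2 - nc (hdot u v) ^+ 2.
Proof.
have := cs_hdot u v; have := nc_ge0 (hdot u v); have := enorm_ge0 u; have := enorm_ge0 v.
nra.
Qed.

Lemma wedge_sq (u v : V) : wedge_norm u v ^+ 2 = enorm u ^+ 2 * enorm v ^+ 2 - nc (hdot u v) ^+ 2.
Proof. by rewrite /wedge_norm sqr_sqrtr // wedge_arg_ge0. Qed.

Lemma wedge_ge0 (u v : V) : 0 <= wedge_norm u v.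
Proof. exact: sqrtr_ge0. Qed.

Lemma dE_ge0 (u v : V) : 0 <= dE u v.
Proof. by rewrite /dE divr_ge0 ?wedge_ge0 ?mulr_ge0 ?enorm_ge0. Qed.

Lemma div_helper (H H' w a b c : R) : 0 < a -> 0 < b -> 0 < c ->
  H * b <= H' * a + w * c -> H / (a * c) <= H' / (b * c) + w / (a * b).
Proof.
move=> ha hb hc h.
have -> : H / (a * c) = (H * b) / (a * b * c) by field; rewrite !gt_eqF.
have -> : H' / (b * c) + w / (a * b) = (H' * a + w * c) / (a * b * c) by field; rewrite !gt_eqF.
by rewrite ler_pM2r // invr_gt0 !mulr_gt0.
Qed.

Lemma kappa_lip (u u' v : V) : u != 0 -> u' != 0 -> v != 0 ->
  kappa u v <= kappa u' v + dE u u'.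
Proof.
move=> hu hu' hv.
have eu := enorm_gt0 hu; have eu' := enorm_gt0 hu'; have ev := enorm_gt0 hv.
set h := hdot u u'.
set E : C := ((enorm u' ^+ 2)%:C)%C.
have E0 : E != 0 by rewrite /E -Rc0; apply/eqP => /RcI /eqP; rewrite sqrf_eq0 gt_eqF.
set c := h / E.
set r := u - c *: u'.
have Hr : herm u v = c * herm u' v + herm r v.
  by rewrite /r herm_subl herm_scalel; ring.
have Hrr : hdot r r = hdot u u - h * cj h / E.
  rewrite /r hdot_subl !hdot_subr !hdot_scalel !hdot_scaler (hdot_sym u u') -/h.
  rewrite /c !hdot_selfE -/E cjM cjV /E cjR -/E.
  move: E0; clearbody E c h => E0.
  by field.
have ncc : nc c * enorm u' <= enorm u.
  rewrite /c ncM ncV /E ncR ger0_norm ?sqr_ge0 //.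
  have := cs_hdot u u'; rewrite -/h => hh.
  rewrite -mulrA (_ : (enorm u' ^+ 2)^-1 * enorm u' = (enorm u')^-1); last first.
    by field; rewrite gt_eqF.
  by rewrite ler_pdivrMr // mulrC.
have er : enorm r * enorm u' = wedge_norm u u'.
  apply/eqP; rewrite -(@eqrXn2 _ 2) ?mulr_ge0 ?enorm_ge0 ?wedge_ge0 //.
  rewrite wedge_sq -/h exprMn enorm2 -enorm2.
  apply/eqP; apply: RcI; rewrite RcM -!hdot_selfE Hrr /E !hdot_selfE mulcJ RcB.
  rewrite (RcM (enorm u ^+ 2)) -/E.
  move: E0; clearbody E c h => E0.
  by field.
have H1 : nc (herm u v) <= nc c * nc (herm u' v) + enorm r * enorm v.
  rewrite Hr; apply: le_trans (ncD _ _) _; rewrite ncM lerD2l; exact: cs_herm.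
rewrite /kappa /dE; apply: div_helper => //.
have := ncc; have := er; have := H1; have := nc_ge0 (herm u' v); have := nc_ge0 c.
have := enorm_ge0 r. nra.
Qed.

Lemma kappa_ge0 (u v : V) : 0 <= kappa u v.
Proof. by rewrite /kappa divr_ge0 ?nc_ge0 ?mulr_ge0 ?enorm_ge0. Qed.

Lemma near_oo_ex (P : nat -> Prop) : (\forall n \near \oo, P n) -> exists N, forall n, (N <= n)%N -> P n.
Proof. by case=> N _ HN; exists N => n hn; apply: HN. Qed.

Lemma incr_ge (psi : nat -> nat) : (forall n, (psi n < psi n.+1)%N) -> forall n, (n <= psi n)%N.
Proof. by move=> H; elim=> // n IH; apply: leq_ltn_trans IH (H n). Qed.

Lemma cvg_ex (f : nat -> R) : f n @[n --> \oo] --> (0 : R) -> (forall n, 0 <= f n) ->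
  forall e, 0 < e -> exists N, forall n, (N <= n)%N -> f n < e.
Proof.
move=> Hf Hp e he; move/cvgr_dist_lt: Hf => /(_ e he) /near_oo_ex [N HN].
exists N => n hn; have := HN n hn; by rewrite sub0r normrN ger0_norm.
Qed.

Lemma sep_delta (K1 K2 : set V) : K1 `<=` S3 (R:=R) -> K2 `<=` S3 (R:=R) ->
  pcompact K1 -> pcompact K2 ->
  (forall u v, K1 u -> K2 v -> ~ proj_eq u v) ->
  exists d : R, 0 < d /\ forall x y, K1 x -> K2 y -> d <= kappa x y.
Proof.
move=> S1 S2 cK1 cK2 disj.
case: (pselect (exists d : R, 0 < d /\ forall x y, K1 x -> K2 y -> d <= kappa x y)) => // Hn.
exfalso.
have Hs : forall n : nat, exists xy : V * V,
    K1 xy.1 /\ K2 xy.2 /\ kappa xy.1 xy.2 < (n.+1%:R)^-1.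
  move=> n; apply: contrapT => Hne; apply: Hn; exists (n.+1%:R)^-1; split.
    by rewrite invr_gt0 ltr0n.
  move=> x y hx hy; rewrite leNgt; apply/negP => hlt; apply: Hne; by exists (x, y).
have [f Hf] := choice Hs.
pose xs n := (f n).1; pose ys n := (f n).2.
have Kx : forall n, K1 (xs n) by move=> n; case: (Hf n).
have Ky : forall n, K2 (ys n) by move=> n; case: (Hf n) => _ [].
have Kk : forall n, kappa (xs n) (ys n) < (n.+1%:R)^-1 by move=> n; case: (Hf n) => _ [].
have [phi [a [phii [Ka Ca]]]] := cK1 xs Kx.
have [psi [b [psii [Kb Cb]]]] := cK2 (fun n => ys (phi n)) (fun n => Ky (phi n)).
have nz1 : forall u, K1 u -> u != 0 by move=> u /S1 [].
have nz2 : forall u, K2 u -> u != 0 by move=> u /S2 [].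
have key : forall e, 0 < e -> kappa a b < e *+ 3.
  move=> e he.
  have [N1 HN1] := cvg_ex Ca (fun n => dE_ge0 _ _) he.
  have [N2 HN2] := cvg_ex Cb (fun n => dE_ge0 _ _) he.
  have [N3 HN3] := near_oo_ex (nbhs_infty_ger e^-1).
  pose m := maxn (maxn N1 N2) N3.
  have m1 : (N1 <= m)%N by rewrite /m !leq_max leqnn.
  have m2 : (N2 <= m)%N by rewrite /m !leq_max leqnn orbT.
  have m3 : (N3 <= m)%N by rewrite /m !leq_max leqnn orbT.
  have psim : (m <= psi m)%N := incr_ge psii m.
  have phipsim : (psi m <= phi (psi m))%N := incr_ge phii (psi m).
  set k := phi (psi m).
  have d1 : dE (xs k) a < e by apply: HN1; exact: leq_trans psim.
  have d2 : dE (ys k) b < e by apply: HN2.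
  have d3 : kappa (xs k) (ys k) < e.
    apply: lt_le_trans (Kk k) _.
    have hm := HN3 m m3.
    have hk : (m%:R : R) <= k%:R by rewrite ler_nat; exact: leq_trans psim phipsim.
    rewrite -[e]invrK lef_pV2 ?posrE ?invr_gt0 ?ltr0n //.
    rewrite -addn1 natrD; lra.
  have l1 := kappa_lip (nz1 _ Ka) (nz1 _ (Kx k)) (nz2 _ Kb).
  have l2 := kappa_lip (nz2 _ Kb) (nz2 _ (Ky k)) (nz1 _ (Kx k)).
  rewrite (kappa_sym b) (kappa_sym (ys k)) in l2.
  rewrite (dE_sym a) in l1; rewrite (dE_sym b) in l2.
  rewrite -mulr_natr; lra.
have k0 : kappa a b <= 0.
  rewrite leNgt; apply/negP => hk.
  have := key (kappa a b / 3%:R); rewrite divr_gt0 // => /(_ isT).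
  have -> : kappa a b / 3%:R *+ 3 = kappa a b by rewrite -mulr_natr mulfVK.
  by rewrite ltxx.
have hab : herm a b = 0.
  apply: nc_eq0; apply/eqP; rewrite eq_le nc_ge0 andbT.
  move: k0; rewrite /kappa ler_pdivrMr ?mul0r //.
  by apply: mulr_gt0; apply: enorm_gt0; [exact: nz1 | exact: nz2].
exact: (disj a b Ka Kb (null_perp (S1 _ Ka) (S2 _ Kb) hab)).
Qed.

End SA.

Ltac pos := match goal with
  | |- is_true (0 <= _ * _) => apply: mulr_ge0; pos
  | |- is_true (0 <= _ + _) => apply: addr_ge0; pos
  | |- is_true (0 <= _ ^+ _) => apply: exprn_ge0; pos
  | |- is_true (0 < _ * _) => apply: mulr_gt0; pos
  | |- is_true (0 < _ ^+ _) => apply: exprn_gt0; pos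
  | _ => first [ done | (apply: ltW; done) | (by rewrite ler0n) | (by rewrite ltr0n) | lra | idtac ] end.

Section RL.
Variable R : realFieldType.

Lemma cancel_pos (a b c : R) : 0 < c -> a * c <= b * c -> a <= b.
Proof. by move=> hc; rewrite ler_pM2r. Qed.

Lemma le_eq (a b : R) : a = b -> a <= b. Proof. by move->. Qed.

Lemma t1_bound (T u A E : R) : 0 < A -> 0 <= T -> 0 <= u -> 1 <= E ->
  T * A ^+ 2 <= u ^+ 2 -> u <= E * A -> T * u <= E ^+ 3 * A.
Proof.
move=> hA hT hu hE h1 h2.
apply: (@cancel_pos _ _ (A ^+ 2)); first by rewrite exprn_gt0.
have h3 : T * u * A ^+ 2 <= u ^+ 3 by rewrite mulrAC; have := ler_wpM2r hu h1; rewrite -exprSr.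
have h4 : u ^+ 3 <= (E * A) ^+ 3 by rewrite lerXn2r // ?nnegrE // mulr_ge0 //; lra.
apply: le_trans h3 (le_trans h4 _); apply: le_eq; ring.
Qed.

Lemma cancel_pos' (a b c : R) : 0 < c -> c * a <= c * b -> a <= b.
Proof. by move=> hc; rewrite ler_pM2l. Qed.

Lemma G1_lem (al A ga N la mu nu : R) : 0 <= al -> 0 < A -> 0 <= ga -> 0 < N -> 0 <= la -> 0 <= mu -> 0 <= nu ->
  mu * al * A = nu * ga * N -> nu ^+ 2 * N <= 2 * la * mu * A -> mu * al ^+ 2 * A <= 2 * la * ga ^+ 2 * N.
Proof.
move=> hal hA hga hN hla hmu hnu e1 e2.
case: (eqVneq mu 0) => [->|mu0]; first by rewrite !mul0r; pos.
have hmu' : 0 < mu by rewrite lt_def mu0.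
apply: (@cancel_pos' _ _ (mu * A)); first by rewrite mulr_gt0.
have : (mu * al * A) ^+ 2 <= 2 * la * mu * A * (ga ^+ 2 * N).
  rewrite e1 (_ : (nu * ga * N) ^+ 2 = (nu ^+ 2 * N) * (ga ^+ 2 * N)); last by ring.
  by apply: ler_wpM2r => //; rewrite mulr_ge0 ?sqr_ge0 // ltW.
move=> h; apply: le_trans (le_trans h _); apply: le_eq; ring.
Qed.

Lemma RL_lower (E X Y P N A al ga T la mu nu Z : R) :
  1 <= E -> 0 < X -> 0 < Y -> 0 < P -> 0 < N -> 0 < A -> 0 < ga -> 0 <= al ->
  0 <= la -> 0 <= mu -> 0 <= nu -> 0 <= T ->
  X * Y <= E * A -> A ^+ 2 * P ^+ 2 <= N * (X ^+ 2 * Y ^+ 2) -> N <= P ^+ 2 ->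
  T * A ^+ 2 <= X ^+ 2 * Y ^+ 2 -> T * (ga ^+ 2 * N) <= al ^+ 2 * X ^+ 2 ->
  mu * al * A = nu * ga * N -> nu ^+ 2 * N <= 2 * la * mu * A -> Z <= la * X + mu * Y + nu * P ->
  T * Y * Z <= 5 * E ^+ 4 * la * A.
Proof.
move=> hE hX hY hP hN hA hga hal hla hmu hnu hT hXY hAP hNP F1 F2 e1 e2 hZ.
have G1 := G1_lem hal hA (ltW hga) hN hla hmu hnu e1 e2.
have hXY0 : 0 < X * Y by rewrite mulr_gt0.
have E0 : 0 <= E by lra.
have E3 : E ^+ 3 <= E ^+ 4.
  rewrite [X in _ <= X]exprSr; have := exprn_ge0 3 E0; nra.
have E2 : E ^+ 2 <= E ^+ 4.
  rewrite (_ : E ^+ 4 = E ^+ 2 * E ^+ 2); last by ring.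
  have := exprn_ge0 2 E0; have : 1 <= E ^+ 2 by rewrite expr_ge1. nra.
have XY2 : (X * Y) ^+ 2 <= (E * A) ^+ 2 by rewrite lerXn2r // ?nnegrE ?mulr_ge0 //; lra.
have XY3 : (X * Y) ^+ 3 <= (E * A) ^+ 3 by rewrite lerXn2r // ?nnegrE ?mulr_ge0 //; lra.
have XY4 : (X * Y) ^+ 4 <= (E * A) ^+ 4 by rewrite lerXn2r // ?nnegrE ?mulr_ge0 //; lra.
have t1 : T * Y * (la * X) <= E ^+ 3 * A * la.
  have := @t1_bound T (X * Y) A E hA hT (ltW hXY0) hE.
  rewrite exprMn => /(_ F1 hXY) h.
  have := ler_wpM2r hla h => h'; apply: le_trans h'; apply: le_eq; ring.
have [t2 t3] : T * Y * (mu * Y) <= 2 * E ^+ 4 * A * la /\ T * Y * (nu * P) <= 2 * E ^+ 3 * A * la.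
  case: (lerP (al * X) (ga * P)) => hs.
  - case: (eqVneq al 0) => [al0|al0].
      have T0 : T = 0.
        move: F2; rewrite al0 expr0n /= mul0r => F2.
        apply/eqP; rewrite eq_le hT andbT.
        have h : 0 < ga ^+ 2 * N by pos.
        nra.
      rewrite T0 !mul0r; split; pos.
    have hal' : 0 < al by rewrite lt_def al0.
    split.
    +
      have h1 : T * Y ^+ 2 * mu * A * al ^+ 2 <= 2 * la * X ^+ 2 * Y ^+ 2 * al ^+ 2.
        have a1 : T * Y ^+ 2 * (mu * al ^+ 2 * A) <= T * Y ^+ 2 * (2 * la * ga ^+ 2 * N).
          by apply: ler_wpM2l => //; rewrite mulr_ge0 ?sqr_ge0.
        have a2 : 2 * la * Y ^+ 2 * (T * (ga ^+ 2 * N)) <= 2 * la * Y ^+ 2 * (al ^+ 2 * X ^+ 2).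
          by apply: ler_wpM2l => //; pos.
        apply: le_trans (le_eq _) (le_trans a1 (le_trans (le_eq _) (le_trans a2 (le_eq _)))); ring.
      have h2 : T * Y ^+ 2 * mu * A <= 2 * la * X ^+ 2 * Y ^+ 2.
        by apply: (@cancel_pos _ _ (al ^+ 2)); rewrite ?exprn_gt0.
      have h3 : T * Y ^+ 2 * mu * A <= 2 * la * E ^+ 2 * A ^+ 2.
        apply: le_trans h2 _; rewrite -mulrA -exprMn (_ : 2 * la * E ^+ 2 * A ^+ 2 = 2 * la * (E * A) ^+ 2); last by ring.
        by apply: ler_wpM2l => //; lra.
      have h4 : T * Y ^+ 2 * mu <= 2 * la * E ^+ 2 * A.
        by apply: (@cancel_pos _ _ A) => //; apply: le_trans h3 (le_eq _); ring.
      apply: le_trans (le_eq _) (le_trans h4 _); first by ring.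
      rewrite (_ : 2 * E ^+ 4 * A * la = 2 * la * E ^+ 4 * A); last by ring.
      apply: ler_wpM2r; first lra. apply: ler_wpM2l => //; lra.
    +
      have h1 : T * Y * nu * P * (ga ^+ 3 * N ^+ 2) <= 2 * la * ga ^+ 3 * N * (X * Y * P ^+ 2).
        have a1 : T * (ga ^+ 2 * N) * (Y * P * (mu * al * A)) <= al ^+ 2 * X ^+ 2 * (Y * P * (mu * al * A)).
          by apply: ler_wpM2r => //; pos.
        have a2 : X ^+ 2 * Y * P * al * (mu * al ^+ 2 * A) <= X ^+ 2 * Y * P * al * (2 * la * ga ^+ 2 * N).
          by apply: ler_wpM2l => //; pos.
        have a3 : X * Y * P * (al * X) * (2 * la * ga ^+ 2 * N) <= X * Y * P * (ga * P) * (2 * la * ga ^+ 2 * N).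
          by apply: ler_wpM2r; first pos; apply: ler_wpM2l; pos.
        apply: le_trans (le_eq _) (le_trans a1 _); first by rewrite e1; ring.
        apply: le_trans (le_eq _) (le_trans a2 _); first by ring.
        apply: le_trans (le_eq _) (le_trans a3 (le_eq _)); ring.
      have h2 : T * Y * nu * P * N <= 2 * la * (X * Y * P ^+ 2).
        apply: (@cancel_pos _ _ (ga ^+ 3 * N)); first by rewrite mulr_gt0 ?exprn_gt0.
        by apply: le_trans (le_eq _) (le_trans h1 (le_eq _)); ring.
      have h3 : T * Y * nu * P * N * A ^+ 2 <= 2 * la * (X * Y) * (N * (X ^+ 2 * Y ^+ 2)).
        have := ler_wpM2r (sqr_ge0 A) h2 => h.
        apply: le_trans h _; rewrite (_ : 2 * la * (X * Y * P ^+ 2) * A ^+ 2 = 2 * la * (X * Y) * (A ^+ 2 * P ^+ 2)); last by ring.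
        by apply: ler_wpM2l => //; rewrite mulr_ge0 //; lra.
      have h4 : T * Y * nu * P * A ^+ 2 <= 2 * la * (X * Y) ^+ 3.
        apply: (@cancel_pos _ _ N) => //; apply: le_trans (le_eq _) (le_trans h3 (le_eq _)); ring.
      have h5 : T * Y * nu * P * A ^+ 2 <= 2 * la * E ^+ 3 * A * A ^+ 2.
        apply: le_trans h4 _; rewrite (_ : 2 * la * E ^+ 3 * A * A ^+ 2 = 2 * la * (E * A) ^+ 3); last by ring.
        by apply: ler_wpM2l => //; lra.
      have h6 : T * Y * nu * P <= 2 * la * E ^+ 3 * A.
        by apply: (@cancel_pos _ _ (A ^+ 2)); rewrite ?exprn_gt0.
      by apply: le_trans (le_eq _) (le_trans h6 (le_eq _)); ring.
  - have hal' : 0 < al.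
      have : 0 < ga * P by rewrite mulr_gt0.
      move=> h; have : 0 < al * X by apply: lt_trans h hs.
      by rewrite pmulr_lgt0.
    have hgp : ga * P <= al * X by apply: ltW.
    split.
    + have m1 : mu * A * al ^+ 2 <= 2 * la * X ^+ 2 * al ^+ 2.
        have a1 : 2 * la * ga ^+ 2 * N <= 2 * la * (ga * P) ^+ 2.
          rewrite exprMn -mulrA; apply: ler_wpM2l; first lra.
          by apply: ler_wpM2l; rewrite ?sqr_ge0.
        have a2 : 2 * la * (ga * P) ^+ 2 <= 2 * la * (al * X) ^+ 2.
          by apply: ler_wpM2l; [lra | rewrite lerXn2r // ?nnegrE ?mulr_ge0 //; lra].
        apply: le_trans (le_eq _) (le_trans G1 (le_trans a1 (le_trans a2 (le_eq _)))); ring.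
      have m2 : mu * A <= 2 * la * X ^+ 2 by apply: (@cancel_pos _ _ (al ^+ 2)); rewrite ?exprn_gt0.
      have h1 : T * Y ^+ 2 * mu * A ^+ 3 <= 2 * la * (X * Y) ^+ 4.
        have a1 : (T * A ^+ 2) * (Y ^+ 2 * (mu * A)) <= (X ^+ 2 * Y ^+ 2) * (Y ^+ 2 * (mu * A)).
          by apply: ler_wpM2r => //; pos.
        have a2 : X ^+ 2 * Y ^+ 4 * (mu * A) <= X ^+ 2 * Y ^+ 4 * (2 * la * X ^+ 2).
          by apply: ler_wpM2l => //; rewrite mulr_ge0 ?exprn_ge0 //; lra.
        apply: le_trans (le_eq _) (le_trans a1 (le_trans (le_eq _) (le_trans a2 (le_eq _)))); ring.
      have h2 : T * Y ^+ 2 * mu * A ^+ 3 <= 2 * la * E ^+ 4 * A * A ^+ 3.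
        apply: le_trans h1 _; rewrite (_ : 2 * la * E ^+ 4 * A * A ^+ 3 = 2 * la * (E * A) ^+ 4); last by ring.
        by apply: ler_wpM2l => //; lra.
      have h3 : T * Y ^+ 2 * mu <= 2 * la * E ^+ 4 * A.
        by apply: (@cancel_pos _ _ (A ^+ 3)); rewrite ?exprn_gt0.
      by apply: le_trans (le_eq _) (le_trans h3 (le_eq _)); ring.
    + have h1 : T * Y * nu * P * A ^+ 2 * ga * N * al <= 2 * la * ga ^+ 2 * N * X ^+ 2 * Y ^+ 3 * P.
        have a1 : (T * A ^+ 2) * (Y * P * (nu * ga * N) * al) <= (X ^+ 2 * Y ^+ 2) * (Y * P * (nu * ga * N) * al).
          by apply: ler_wpM2r => //; pos.
        have a2 : X ^+ 2 * Y ^+ 3 * P * (mu * al ^+ 2 * A) <= X ^+ 2 * Y ^+ 3 * P * (2 * la * ga ^+ 2 * N).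
          by apply: ler_wpM2l => //; pos.
        apply: le_trans (le_eq _) (le_trans a1 _); first by ring.
        rewrite -e1; apply: le_trans (le_eq _) (le_trans a2 (le_eq _)); ring.
      have h2 : T * Y * nu * P * A ^+ 2 * al <= 2 * la * ga * X ^+ 2 * Y ^+ 3 * P.
        apply: (@cancel_pos _ _ (ga * N)); first by rewrite mulr_gt0.
        by apply: le_trans (le_eq _) (le_trans h1 (le_eq _)); ring.
      have h3 : T * Y * nu * P * A ^+ 2 * al <= 2 * la * (X * Y) ^+ 3 * al.
        apply: le_trans h2 _.
        have := ler_wpM2l (_ : 0 <= 2 * la * X ^+ 2 * Y ^+ 3) hgp => h.
        apply: le_trans (le_eq _) (le_trans (h _) (le_eq _)); try ring.
        by pos.
      have h4 : T * Y * nu * P * A ^+ 2 <= 2 * la * (X * Y) ^+ 3.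
        by apply: (@cancel_pos _ _ al).
      have h5 : T * Y * nu * P * A ^+ 2 <= 2 * la * E ^+ 3 * A * A ^+ 2.
        apply: le_trans h4 _; rewrite (_ : 2 * la * E ^+ 3 * A * A ^+ 2 = 2 * la * (E * A) ^+ 3); last by ring.
        by apply: ler_wpM2l => //; lra.
      have h6 : T * Y * nu * P <= 2 * la * E ^+ 3 * A.
        by apply: (@cancel_pos _ _ (A ^+ 2)); rewrite ?exprn_gt0.
      by apply: le_trans (le_eq _) (le_trans h6 (le_eq _)); ring.
have hZ' : T * Y * Z <= T * Y * (la * X) + T * Y * (mu * Y) + T * Y * (nu * P).
  rewrite -!mulrDr; apply: ler_wpM2l => //; rewrite mulr_ge0 //; lra.
have hA0 : 0 <= A * la by rewrite mulr_ge0 //; lra.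
have q1 : E ^+ 3 * (A * la) <= E ^+ 4 * (A * la) by apply: ler_wpM2r.
rewrite !mulrA in q1.
apply: le_trans hZ' _.
have -> : 5 * E ^+ 4 * la * A = E ^+ 4 * A * la + 2 * E ^+ 4 * A * la + 2 * E ^+ 4 * A * la by ring.
clear -t1 t2 t3 q1; lra.
Qed.

Lemma RL_F (X Y P N A al ga T W : R) :
  0 < X -> 0 < Y -> 0 < P -> 0 < N -> 0 < A -> 0 < ga -> 0 <= al -> 0 <= T -> 0 <= W ->
  N <= P ^+ 2 -> T * P ^+ 2 * W ^+ 2 = al ^+ 2 * X ^+ 2 * N ->
  al * A <= W * Y -> ga * N <= W * P -> W <= al * X + ga * P ->
  [/\ T * A ^+ 2 <= X ^+ 2 * Y ^+ 2, T * (ga ^+ 2 * N) <= al ^+ 2 * X ^+ 2 &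
      al ^+ 2 * X ^+ 2 * N <= T * P ^+ 2 * (al * X + ga * P) ^+ 2].
Proof.
move=> hX hY hP hN hA hga hal hT hW hNP e hW1 hW2 hW3.
have W0 : 0 < W.
  have : 0 < ga * N by pos.
  move=> h; have : 0 < W * P by apply: lt_le_trans h hW2.
  by rewrite pmulr_lgt0.
split.
- case: (eqVneq al 0) => [al0|al0].
    have : T * P ^+ 2 * W ^+ 2 = 0 by rewrite e al0 expr0n /= !mul0r.
    move=> h0; have hPW : 0 < P ^+ 2 * W ^+ 2 by pos.
    have -> : T = 0.
      have : T * (P ^+ 2 * W ^+ 2) = 0 by rewrite mulrA.
      move=> h; rewrite -[T](mulfK (lt0r_neq0 hPW)) h mul0r //.
    by rewrite mul0r; pos.
  have hal' : 0 < al by rewrite lt_def al0.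
  have h1 : (al * A) ^+ 2 <= (W * Y) ^+ 2 by rewrite lerXn2r // ?nnegrE; pos.
  apply: (@cancel_pos _ _ (al ^+ 2 * P ^+ 2)); first by pos.
  have a1 : T * P ^+ 2 * (al * A) ^+ 2 <= T * P ^+ 2 * (W * Y) ^+ 2 by apply: ler_wpM2l; pos.
  have a2 : al ^+ 2 * X ^+ 2 * Y ^+ 2 * N <= al ^+ 2 * X ^+ 2 * Y ^+ 2 * P ^+ 2 by apply: ler_wpM2l; pos.
  apply: le_trans (le_eq _) (le_trans a1 (le_trans (le_eq _) (le_trans a2 (le_eq _)))).
  + ring.
  + have -> : T * P ^+ 2 * (W * Y) ^+ 2 = (T * P ^+ 2 * W ^+ 2) * Y ^+ 2 by ring.
    rewrite e; ring.
  + ring.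
- have h1 : (ga * N) ^+ 2 <= (W * P) ^+ 2 by rewrite lerXn2r // ?nnegrE; pos.
  apply: (@cancel_pos _ _ (N * P ^+ 2)); first by pos.
  have a1 : T * P ^+ 2 * (ga * N) ^+ 2 <= T * P ^+ 2 * (W * P) ^+ 2 by apply: ler_wpM2l; pos.
  apply: le_trans (le_eq _) (le_trans a1 (le_eq _)).
  + ring.
  + have -> : T * P ^+ 2 * (W * P) ^+ 2 = (T * P ^+ 2 * W ^+ 2) * P ^+ 2 by ring.
    rewrite e; ring.
- have h1 : W ^+ 2 <= (al * X + ga * P) ^+ 2 by rewrite lerXn2r // ?nnegrE; pos.
  rewrite -e; apply: ler_wpM2l; pos.
Qed.

Lemma RU1 (E X Y P N A al ga T H0 Z0 : R) :
  1 <= E -> 0 < X -> 0 < Y -> 0 < P -> 0 < N -> 0 < A -> 0 < ga -> 0 <= al -> 0 <= T -> 0 < Z0 ->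
  X * Y <= E * A -> A ^+ 2 * P ^+ 2 <= N * (X ^+ 2 * Y ^+ 2) ->
  al ^+ 2 * X ^+ 2 * N <= T * P ^+ 2 * (al * X + ga * P) ^+ 2 -> al * X <= ga * P ->
  H0 * (2 * ga ^+ 2 * N) = al ^+ 2 * A ^+ 2 -> A <= Z0 * X ->
  H0 <= 9 * E ^+ 4 * T * Y * Z0.
Proof.
move=> hE hX hY hP hN hA hga hal hT hZ hXY hAP F3 hs eH hZ0.
have E0 : 0 <= E by lra.
have b1 : al ^+ 2 * X ^+ 2 * N <= 4 * T * ga ^+ 2 * P ^+ 4.
  apply: le_trans F3 _.
  have : (al * X + ga * P) ^+ 2 <= (2 * (ga * P)) ^+ 2 by rewrite lerXn2r // ?nnegrE; pos.
  move=> h; have := ler_wpM2l (_ : 0 <= T * P ^+ 2) h => /(_ ltac:(pos)) h'.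
  by apply: le_trans h' (le_eq _); ring.
have b2 : A * P ^+ 4 <= E ^+ 3 * N ^+ 2 * (X * Y).
  have c1 : (A ^+ 2 * P ^+ 2) ^+ 2 <= (N * (X ^+ 2 * Y ^+ 2)) ^+ 2 by rewrite lerXn2r // ?nnegrE; pos.
  have c2 : (X * Y) ^+ 3 <= (E * A) ^+ 3 by rewrite lerXn2r // ?nnegrE; pos.
  apply: (@cancel_pos _ _ (A ^+ 3)); first by pos.
  apply: le_trans (le_eq _) (le_trans c1 _); first by ring.
  have := ler_wpM2l (_ : 0 <= N ^+ 2 * (X * Y)) c2 => /(_ ltac:(pos)) h.
  by apply: le_trans (le_eq _) (le_trans h (le_eq _)); ring.
have E34 : 4 * E ^+ 3 <= 18 * E ^+ 4.
  rewrite [E ^+ 4]exprSr; have := exprn_ge0 3 E0; nra.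
apply: (@cancel_pos _ _ (2 * ga ^+ 2 * N * X)); first by pos.
have g1 : H0 * (2 * ga ^+ 2 * N * X) = al ^+ 2 * A ^+ 2 * X by rewrite mulrA eH.
rewrite g1.
have g2 : 9 * E ^+ 4 * T * Y * A * (2 * ga ^+ 2 * N) <= 9 * E ^+ 4 * T * Y * Z0 * (2 * ga ^+ 2 * N * X).
  have := ler_wpM2l (_ : 0 <= 9 * E ^+ 4 * T * Y * (2 * ga ^+ 2 * N)) hZ0 => /(_ ltac:(pos)) h.
  by apply: le_trans (le_eq _) (le_trans h (le_eq _)); ring.
apply: le_trans g2.
apply: (@cancel_pos _ _ (X * N)); first by pos.
have g3 : al ^+ 2 * A ^+ 2 * X * (X * N) = A ^+ 2 * (al ^+ 2 * X ^+ 2 * N) by ring.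
rewrite g3.
have g4 : A ^+ 2 * (al ^+ 2 * X ^+ 2 * N) <= A ^+ 2 * (4 * T * ga ^+ 2 * P ^+ 4) by apply: ler_wpM2l; pos.
apply: le_trans g4 _.
have g5 : (4 * T * ga ^+ 2 * A) * (A * P ^+ 4) <= (4 * T * ga ^+ 2 * A) * (E ^+ 3 * N ^+ 2 * (X * Y)).
  by apply: ler_wpM2l; pos.
apply: le_trans (le_eq _) (le_trans g5 _); first by ring.
have g6 : (T * ga ^+ 2 * A * N ^+ 2 * X * Y) * (4 * E ^+ 3) <= (T * ga ^+ 2 * A * N ^+ 2 * X * Y) * (18 * E ^+ 4).
  by apply: ler_wpM2l; pos.
apply: le_trans (le_eq _) (le_trans g6 (le_eq _)); ring.
Qed.

Lemma RU2 (E X Y P N A al ga T : R) :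
  1 <= E -> 0 < X -> 0 < Y -> 0 < P -> 0 < N -> 0 < A -> 0 < ga -> 0 <= al -> 0 <= T ->
  X * Y <= E * A -> A ^+ 2 * P ^+ 2 <= N * (X ^+ 2 * Y ^+ 2) ->
  al ^+ 2 * X ^+ 2 * N <= T * P ^+ 2 * (al * X + ga * P) ^+ 2 -> ga * P <= al * X ->
  A <= 9 * E ^+ 4 * T * (X * Y).
Proof.
move=> hE hX hY hP hN hA hga hal hT hXY hAP F3 hs.
have E0 : 0 <= E by lra.
have hal' : 0 < al.
  have : 0 < ga * P by pos.
  move=> h; have : 0 < al * X by apply: lt_le_trans h hs.
  by rewrite pmulr_lgt0.
have b1 : al ^+ 2 * X ^+ 2 * N <= al ^+ 2 * X ^+ 2 * (4 * T * P ^+ 2).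
  apply: le_trans F3 _.
  have : (al * X + ga * P) ^+ 2 <= (2 * (al * X)) ^+ 2 by rewrite lerXn2r // ?nnegrE; pos.
  move=> h; have := ler_wpM2l (_ : 0 <= T * P ^+ 2) h => /(_ ltac:(pos)) h'.
  by apply: le_trans h' (le_eq _); ring.
have b2 : N <= 4 * T * P ^+ 2 by move: b1; rewrite ler_pM2l //; pos.
have b3 : A ^+ 2 <= 4 * T * (X * Y) ^+ 2.
  apply: (@cancel_pos _ _ (P ^+ 2)); first by pos.
  apply: le_trans hAP _.
  have := ler_wpM2r (_ : 0 <= X ^+ 2 * Y ^+ 2) b2 => /(_ ltac:(pos)) h.
  by apply: le_trans h (le_eq _); ring.
have b4 : A * A <= 4 * E * T * (X * Y) * A.
  apply: le_trans (le_eq _) (le_trans b3 _); first by ring.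
  have := ler_wpM2l (_ : 0 <= 4 * T * (X * Y)) hXY => /(_ ltac:(pos)) h.
  by apply: le_trans (le_eq _) (le_trans h (le_eq _)); ring.
have b5 : A <= 4 * E * T * (X * Y) by apply: (@cancel_pos _ _ A).
apply: le_trans b5 _.
have E14 : 4 * E <= 9 * E ^+ 4.
  have : 1 <= E ^+ 3 by rewrite expr_ge1.
  rewrite [E ^+ 4]exprSr; nra.
have := ler_wpM2r (_ : 0 <= T * (X * Y)) E14 => /(_ ltac:(pos)) h.
by apply: le_trans (le_eq _) (le_trans h (le_eq _)); ring.
Qed.

End RL.

Section SB.
Variable R : realType.
Local Notation C := R[i].
Local Notation V := (vec R).
Local Notation nc := (@Normc.normc R).
Local Notation cj := (@conjc R).

Ltac cjs := rewrite ?(cjB, cjD, cjN, cjM, cjK, cj1, cj0).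

Lemma herm00 : herm (0 : V) 0 = 0.
Proof. by rewrite hermE !mxE; ring. Qed.

Lemma nc_sq_eq (a b : C) : a = b -> nc a = nc b. Proof. by move->. Qed.

Lemma sqrt_bound (D K q : R) : 0 <= D -> 0 <= K -> 0 <= q -> D ^+ 2 <= K ^+ 2 * q -> D <= K * Num.sqrt q.
Proof.
move=> hD hK hq h.
rewrite -(ger0_norm hK) -sqrtr_sqr -sqrtrM ?sqr_ge0 // -(ger0_norm hD) -sqrtr_sqr.
by rewrite ler_sqrt // mulr_ge0 ?sqr_ge0.
Qed.

Lemma sqrt_bound2 (D K q : R) : 0 <= D -> 0 <= K -> 0 <= q -> q <= K ^+ 2 * D ^+ 2 -> Num.sqrt q <= K * D.
Proof.
move=> hD hK hq h.
rewrite -(ger0_norm hK) -(ger0_norm hD) -!sqrtr_sqr -sqrtrM ?sqr_ge0 //.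
by rewrite ler_sqrt // mulr_ge0 ?sqr_ge0.
Qed.

Lemma decomp3 (u s t v : V) : u - s - t = v -> u = s + t + v.
Proof. move=> <-; apply: vec_eq; rewrite !(eD, eB) !mxE; ring. Qed.

Lemma core (E : R) (x y w p : V) : 1 <= E -> S3 x -> S3 y ->
  enorm x * enorm y <= E * nc (herm x y) -> LC w -> herm x w = 0 -> is_pi x y p ->
  dE p w <= 3 * E ^+ 2 * dist_chain y w /\ dist_chain y w <= 3 * E ^+ 2 * dE p w.
Proof.
move=> hE Sx Sy hk Lw hxw [p0 [hpx hpy]].
have [x0 hxx] := Sx; have [y0 hyy] := Sy.
set a := herm x y in hk *.
set X := enorm x in hk *; set Y := enorm y in hk *; set P := enorm p.
set A := nc a in hk *.
have X0 : 0 < X := enorm_gt0 x0.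
have Y0 : 0 < Y := enorm_gt0 y0.
have P0 : 0 < P := enorm_gt0 p0.
have A0 : 0 < A.
  have : 0 < E * A by apply: lt_le_trans hk; rewrite mulr_gt0.
  by rewrite pmulr_rgt0 //; lra.
have a0 : a != 0 by apply/eqP => ha; move: A0; rewrite /A ha Normc.normc0 ltxx.
have hyx : herm y x = cj a by rewrite herm_sym.
set Q := crossv x y.
have hQQ : herm Q Q = - (a * cj a) by rewrite herm_cross_self hxx hyy hyx mul0r subr0.
have hQ0 : Q != 0.
  apply/eqP => hQ; move: hQQ; rewrite hQ herm00 => /eqP; rewrite eq_sym oppr_eq0 mulf_eq0 conjc_eq0 orbb.
  by rewrite (negbTE a0).
have [c hpc] := cross_span hpx hpy hQ0.
have c0 : c != 0 by apply/eqP => c0; move: p0; rewrite hpc c0 scale0r eqxx.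
set N := nc c ^+ 2 * A ^+ 2.
have N0 : 0 < N by rewrite /N mulr_gt0 // exprn_gt0 // nc_gt0.
have hpp : herm p p = ((- N)%:C)%C.
  rewrite hpc herm_scalel herm_scaler hQQ mulrA mulcJ mulrN (mulcJ a) -RcM RcN.
  by rewrite /N /A.
have hNP : N <= P ^+ 2.
  have := cs_herm p p; rewrite hpp ncR normrN ger0_norm; last exact: ltW.
  by rewrite -expr2.
have hAP : A ^+ 2 * P ^+ 2 <= N * (X ^+ 2 * Y ^+ 2).
  have hQ := hdot_cross_self x y; rewrite -/Q !hdot_selfE mulcJ -RcD -RcM in hQ.
  move/RcI: hQ => hQ.
  have hQ2 : enorm Q ^+ 2 <= X ^+ 2 * Y ^+ 2 by rewrite -hQ lerDl sqr_ge0.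
  rewrite /P hpc enorm_scale exprMn /N.
  have : 0 <= A ^+ 2 * nc c ^+ 2 by rewrite mulr_ge0 ?sqr_ge0.
  move=> h; have := ler_wpM2l h hQ2; move=> h2; apply: le_trans (le_eq _) (le_trans h2 (le_eq _)); ring.
have hwx : herm w x = 0 by rewrite herm_sym hxw cj0.
have hxp : herm x p = 0 by rewrite herm_sym hpx cj0.
have hyp : herm y p = 0 by rewrite herm_sym hpy cj0.
set al_ := herm w y / a.
have [c1 hr1] : exists c1, w - al_ *: x = c1 *: Q.
  apply: cross_span => //.
    by rewrite herm_subl herm_scalel hwx hxx mulr0 subr0.
  by rewrite herm_subl herm_scalel -/a /al_ divfK // subrr.
set ga_ := c1 / c.
have hw : w = al_ *: x + ga_ *: p.
  by rewrite /ga_ hpc scalerA divfK // -hr1 addrC subrK.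
clearbody al_ ga_.
have ga0 : ga_ != 0.
  apply/eqP => g0; move: Lw; rewrite /LC /q hw g0 scale0r addr0 herm_scalel herm_scaler hxx !mulr0.
  by rewrite ltxx.
set h := herm p p.
have hwy : herm w y = al_ * a by rewrite hw herm_addl !herm_scalel hpy mulr0 addr0.
have hwp : herm w p = ga_ * h by rewrite hw herm_addl !herm_scalel hxp mulr0 add0r.
set al := nc al_; set ga := nc ga_; set W := enorm w.
have ga0' : 0 < ga := nc_gt0 ga0.
have al0' : 0 <= al := nc_ge0 _.
have hN : nc h = N by rewrite /h hpp ncR normrN ger0_norm //; exact: ltW.
have W1 : al * A <= W * Y by rewrite /al /A -ncM -hwy /W /Y cs_herm.
have W2 : ga * N <= W * P by rewrite -hN /ga -ncM -hwp /W /P cs_herm.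
have W3 : W <= al * X + ga * P.
  by rewrite /W hw; apply: le_trans (enorm_add _ _) _; rewrite !enorm_scale.
have W0 : 0 < W.
  have : 0 < ga * N by rewrite mulr_gt0.
  move=> hh; have : 0 < W * P by apply: lt_le_trans hh W2.
  by rewrite pmulr_lgt0.
have wedge_id : hdot p p * hdot w w - hdot p w * cj (hdot p w) =
    al_ * cj al_ * (hdot p p * hdot x x - hdot p x * cj (hdot p x)).
  rewrite hw !hdotE !eD !eZ; cjs; ring.
have cons_id : hdot p p * hdot x x - hdot p x * cj (hdot p x) + hdot x x * herm p p =
    - 2%:R * (p 0 i0 * cj (p 0 i0)) * herm x x + 2%:R * (p 0 i0 * cj (x 0 i0)) * cj (herm p x)
    + 2%:R * (x 0 i0 * cj (p 0 i0)) * herm p x - herm p x * cj (herm p x).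
  rewrite !hdotE !hermE; cjs; ring.
rewrite hxx hpx cj0 !mulr0 subr0 !addr0 in cons_id. move: cons_id. rewrite hpp => cons_id.
have wedge2 : wedge_norm p w ^+ 2 = al ^+ 2 * X ^+ 2 * N.
  rewrite wedge_sq; apply: RcI.
  rewrite RcB RcM -!hdot_selfE -mulcJ wedge_id.
  have -> : hdot p p * hdot x x - hdot p x * cj (hdot p x) = hdot x x * ((N%:C)%C) .
    by move: cons_id; rewrite RcN mulrN => /eqP; rewrite subr_eq0 => /eqP.
  by rewrite mulcJ hdot_selfE !RcM mulrA.
set T := dE p w ^+ 2.
have T0 : 0 <= T by rewrite /T sqr_ge0.
have hT : T * P ^+ 2 * W ^+ 2 = al ^+ 2 * X ^+ 2 * N.
  have P0n := lt0r_neq0 P0; have W0n := lt0r_neq0 W0.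
  by rewrite /T /dE -wedge2 -/P -/W; field; rewrite ?mulf_neq0 ?P0n ?W0n.
have [F1 F2 F3] := RL_F X0 Y0 P0 N0 A0 ga0' al0' T0 (ltW W0) hNP hT W1 W2 W3.
have E0 : 0 <= E by lra.
have dE0 : 0 <= dE p w := dE_ge0 _ _.
have hyxv : forall z : V, herm y x = cj a := fun _ => hyx.
have lower : forall z, chain w z -> dE p w <= 3 * E ^+ 2 * dvis y z.
  move=> z [[z0 hzz] hzw].
  have cja0 : cj a != 0 by rewrite conjc_eq0.
  set la_ := herm z y / a; set mu_ := herm z x / cj a.
  have [c2 hr2] : exists c2, z - la_ *: x - mu_ *: y = c2 *: Q.
    apply: cross_span; last exact: hQ0.
    - by rewrite !herm_subl !herm_scalel hxx hyx mulr0 subr0 /mu_ divfK // subrr.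
    - by rewrite !herm_subl !herm_scalel hyy -/a /la_ divfK // mulr0 subr0 subrr.
  set nu_ := c2 / c.
  have hz : z = la_ *: x + mu_ *: y + nu_ *: p.
    by rewrite /nu_ hpc scalerA divfK //; apply: decomp3.
  clearbody la_ mu_ nu_.
  have hzw' : mu_ * cj al_ * cj a + nu_ * cj ga_ * h = 0.
    rewrite -hzw hz hw !(herm_addl, herm_addr, herm_scalel, herm_scaler) ?hxx ?hyx ?hpx ?hxp ?hyp ?hpy.
    rewrite -/h; ring.
  have hzz' : la_ * cj mu_ * a + mu_ * cj la_ * cj a + nu_ * cj nu_ * h = 0.
    rewrite -hzz hz !(herm_addl, herm_addr, herm_scalel, herm_scaler) ?hxx ?hyx ?hpx ?hxp ?hyp ?hpy ?hyy.
    rewrite -/h -/a; ring.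
  have hyz : herm y z = cj la_ * cj a.
    rewrite hz !(herm_addl, herm_addr, herm_scalel, herm_scaler) ?hyx ?hyp ?hyy; ring.
  set la := nc la_; set mu := nc mu_; set nu := nc nu_; set Z := enorm z.
  have e1 : mu * al * A = nu * ga * N.
    have : mu_ * cj al_ * cj a = - (nu_ * cj ga_ * h) by apply/eqP; rewrite -addr_eq0 hzw'.
    move/nc_sq_eq; rewrite ncN !ncM !ncJ hN //.
  have e2 : nu ^+ 2 * N <= 2 * la * mu * A.
    set t := la_ * cj mu_ * a.
    have ht : mu_ * cj la_ * cj a = cj t by rewrite /t; cjs; ring.
    have h1 : t + cj t + nu_ * cj nu_ * h = 0 by rewrite -ht /t; exact: hzz'.
    have : t + cj t = ((nu ^+ 2 * N)%:C)%C.
      have hh : h = ((- N)%:C)%C by exact: hpp.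
      have h2 : t + cj t = - (nu_ * cj nu_ * h) by apply/eqP; rewrite -addr_eq0 h1.
      by rewrite h2 hh mulcJ RcN mulrN opprK (RcM (nu ^+ 2)).
    have -> : t + cj t = ((2 * complex.Re t)%:C)%C.
      by case: (t) => ra ib; apply/eqP; rewrite eq_complex /=; apply/andP; split; apply/eqP; ring.
    move/RcI => <-.
    have := Re_le_nc t; rewrite /t !ncM ncJ -/la -/mu -/A; lra.
  have hZ : Z <= la * X + mu * Y + nu * P.
    rewrite /Z hz; apply: le_trans (enorm_add _ _) _; rewrite enorm_scale lerD2r.
    by apply: le_trans (enorm_add _ _) _; rewrite !enorm_scale.
  have Z0 : 0 < Z := enorm_gt0 z0.
  have key := RL_lower hE X0 Y0 P0 N0 A0 ga0' al0' (nc_ge0 _) (nc_ge0 _) (nc_ge0 _) T0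
     hk hAP hNP F1 F2 e1 e2 hZ.
  rewrite /dvis hyz ncM ncJ ncJ -/la -/A -/Y -/Z.
  apply: sqrt_bound => //; first by rewrite mulr_ge0 // sqr_ge0.
    by rewrite divr_ge0 ?mulr_ge0 ?nc_ge0 //; lra.
  rewrite -/T (_ : (3 * E ^+ 2) ^+ 2 * (la * A / (Y * Z)) = (9 * E ^+ 4 * la * A) / (Y * Z)); last by ring.
  rewrite ler_pdivlMr ?mulr_gt0 //.
  have h4 : 0 <= E ^+ 4 * la * A by rewrite !mulr_ge0 ?nc_ge0 ?exprn_ge0 //; lra.
  apply: le_trans (le_eq _) (le_trans key _); first by ring.
  rewrite -!mulrA; apply: ler_wpM2r; first by rewrite !mulr_ge0 ?nc_ge0 ?exprn_ge0 //; lra.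
  lra.
have K0 : 0 < 3 * E ^+ 2 by rewrite mulr_gt0 // exprn_gt0 //; lra.
have chx : chain w x by split.
set S := [set dvis y z | z in chain w].
have Sne : S !=set0 by exists (dvis y x), x.
have Slb : has_lbound S by exists 0 => s [z _ <-]; exact: sqrtr_ge0.
have infle : forall z, chain w z -> dist_chain y w <= dvis y z.
  by move=> z hz; apply: (ge_inf Slb); exists z.
split.
  rewrite -ler_pdivrMl //; apply: lb_le_inf Sne _ => s [z hz <-].
  by rewrite ler_pdivrMl // lower.
have hAXY : A <= X * Y by rewrite /A /X /Y cs_herm.
case: (lerP (al * X) (ga * P)) => hs; last first.
  apply: le_trans (infle x chx) _.
  rewrite /dvis hyx ncJ -/A -/Y -/X.
  apply: sqrt_bound2; [exact: dE0 | exact: ltW K0 | by rewrite divr_ge0 ?mulr_ge0 //; lra | ].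
  have := RU2 hE X0 Y0 P0 N0 A0 ga0' al0' T0 hk hAP F3 (ltW hs).
  rewrite -/T => hR; rewrite ler_pdivrMr ?mulr_gt0 //.
  by apply: le_trans hR (le_eq _); ring.
have hh : h = ((- N)%:C)%C by exact: hpp.
have h0 : h != 0 by rewrite hh RcN oppr_eq0; apply/eqP => /RcI /eqP; rewrite gt_eqF.
have cga0 : cj ga_ != 0 by rewrite conjc_eq0.
have cja0 : cj a != 0 by rewrite conjc_eq0.
pose nu0 := - (cj al_ * cj a) / (cj ga_ * h).
have hnu : nu0 * (cj ga_ * h) = - (cj al_ * cj a) by rewrite /nu0 divfK // mulf_neq0.
clearbody nu0.
set M := nc nu0 ^+ 2 * N.
pose la0 := ((M / 2)%:C)%C / a.
have hla : la0 * a = ((M / 2)%:C)%C by rewrite /la0 divfK.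
clearbody la0.
set z0 := la0 *: x + y + nu0 *: p.
have hz0x : herm z0 x = cj a.
  rewrite /z0 !(herm_addl, herm_scalel) hxx hyx hpx; ring.
have hz0w : herm z0 w = 0.
  rewrite /z0 hw !(herm_addl, herm_addr, herm_scalel, herm_scaler) ?hxx ?hyx ?hpx ?hxp ?hyp ?hpy -/h.
  apply: (@eq_trans _ _ (cj al_ * cj a + nu0 * (cj ga_ * h))); first by ring.
  by rewrite hnu addrN.
have hz0z0 : herm z0 z0 = 0.
  have -> : herm z0 z0 = la0 * a + cj (la0 * a) + nu0 * cj nu0 * h.
    rewrite /z0 !(herm_addl, herm_addr, herm_scalel, herm_scaler) ?hxx ?hyx ?hpx ?hxp ?hyp ?hpy ?hyy -/h -/a.
    cjs; ring.
  rewrite hla cjR mulcJ hh -RcM -!RcD -Rc0; congr (_%:C)%C.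
  by rewrite /M; field.
have z00 : z0 != 0.
  apply/eqP => hz; move: hz0x; rewrite hz hermE !mxE => /eqP.
  rewrite !mul0r !subr0 eq_sym => hc.
  by move: cja0; rewrite hc.
have chz0 : chain w z0 by split.
apply: le_trans (infle z0 chz0) _.
have hyz0 : herm y z0 = cj la0 * cj a.
  rewrite /z0 !(herm_addr, herm_scaler) ?hyx ?hyp ?hyy; ring.
set Z0 := enorm z0.
have Z0p : 0 < Z0 := enorm_gt0 z00.
have hZ0 : A <= Z0 * X by rewrite /A -ncJ -hz0x /Z0 /X cs_herm.
set H0 := nc (herm y z0).
have eH0 : H0 = M / 2.
  rewrite /H0 hyz0 -cjM ncJ hla ncR ger0_norm //.
  by rewrite /M; apply: divr_ge0; [apply: mulr_ge0; [exact: sqr_ge0 | exact: ltW N0] | rewrite ler0n].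
have enu : nc nu0 * ga * N = al * A.
  have := nc_sq_eq hnu; rewrite ncN !ncM !ncJ -/ga -/al -/A hN.
  by move=> <-; ring.
have eH : H0 * (2 * ga ^+ 2 * N) = al ^+ 2 * A ^+ 2.
  rewrite eH0 /M (_ : al ^+ 2 * A ^+ 2 = (al * A) ^+ 2); last by ring.
  by rewrite -enu; field.
have := RU1 hE X0 Y0 P0 N0 A0 ga0' al0' T0 Z0p hk hAP F3 hs eH hZ0.
rewrite -/T => hR.
rewrite /dvis -/H0 -/Y -/Z0.
apply: sqrt_bound2; [exact: dE0 | exact: ltW K0 | by rewrite divr_ge0 ?nc_ge0 ?mulr_ge0 //; lra | ].
rewrite ler_pdivrMr ?mulr_gt0 //.
rewrite -/T; move: hR; clearbody T Z0 H0 => hR.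
by apply: le_trans hR (le_eq _); ring.
Qed.
End SB.

End Aux.
Import Aux.

Theorem lemma5p10 (R : realType) (K1 K2 : set (vec R)) :
  K1 `<=` S3 (R:=R) -> K2 `<=` S3 (R:=R) ->
  pcompact K1 -> pcompact K2 ->
  K1 !=set0 -> K2 !=set0 ->
  (forall u v, K1 u -> K2 v -> ~ proj_eq u v) ->
  exists C : R, 1 <= C /\
    forall x y w : vec R, K1 x -> K2 y -> LC w ->
      chain w x -> (exists z, chain w z /\ K2 z) ->
      forall p : vec R, is_pi x y p ->
        C^-1 * dist_chain y w <= dE p w /\ dE p w <= C * dist_chain y w.
Proof.
move=> S1 S2 cK1 cK2 _ _ disj.
have [d [d0 hd]] := sep_delta S1 S2 cK1 cK2 disj.
set E := Num.max 1 d^-1.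
have hE : 1 <= E by rewrite /E le_max lexx.
have hE' : d^-1 <= E by rewrite /E le_max lexx orbT.
have C0 : 0 < 3 * E ^+ 2 by rewrite mulr_gt0 // exprn_gt0 //; apply: lt_le_trans hE.
exists (3 * E ^+ 2); split.
  have : 1 <= E ^+ 2 by rewrite expr2; nra.
  lra.
move=> x y w Kx Ky Lw [Sx hxw] _ p hp.
have Sy := S2 _ Ky.
have hk : enorm x * enorm y <= E * Normc.normc (herm x y).
  have X0 := enorm_gt0 Sx.1; have Y0 := enorm_gt0 Sy.1.
  have := hd x y Kx Ky; rewrite /kappa ler_pdivlMr ?mulr_gt0 // => h.
  have h2 : enorm x * enorm y <= d^-1 * Normc.normc (herm x y).
    by rewrite (mulrC d^-1) ler_pdivlMr // mulrC.
  apply: le_trans h2 _; apply: ler_wpM2r => //; exact: nc_ge0.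
have [h1 h2] := core hE Sx Sy hk Lw hxw hp.
split => //.
by rewrite ler_pdivrMl.
Qed.
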